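(* Let $S$ be an anti-rectangular AG-groupoid. A nonempty subset $I\subseteq S$ is a left ideal of $S$ if and only if it is a right ideal of $S$.
   Context: An AG-groupoid is a set $S$ with a binary operation satisfying $(ab)c=(cb)a$ for all $a,b,c\in S$. It is anti-rectangular if $a=(ba)b$ for all $a,b\in S$. For nonempty subsets, $AB=\{ab:a\in A,b\in B\}$. A left ideal is a nonempty subset $I$ with $SI\subseteq I$; a right ideal is a nonempty subset $I$ with $IS\subseteq I$. *)

(* Defs.v *)
Definition AG_groupoid (S : Type) (op : S -> S -> S) : Prop :=
  forall a b c : S, op (op a b) c = op (op c b) a.

Definition anti_rectangular (S : Type) (op : S -> S -> S) : Prop :=
  forall a b : S, a = op (op b a) b.

Definition nonempty (S : Type) (I : S -> Prop) : Prop := exists x, I x.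

Definition left_ideal (S : Type) (op : S -> S -> S) (I : S -> Prop) : Prop :=
  nonempty S I /\ (forall s x : S, I x -> I (op s x)).

Definition right_ideal (S : Type) (op : S -> S -> S) (I : S -> Prop) : Prop :=
  nonempty S I /\ (forall x s : S, I x -> I (op x s)).

(* Main.v *)
Require Import Defs.

Theorem lemma3 (S : Type) (op : S -> S -> S)
  (hAG : AG_groupoid S op) (hAR : anti_rectangular S op)
  (I : S -> Prop) (hI : nonempty S I) :
  left_ideal S op I <-> right_ideal S op I.
Proof.
  split; intros [hn H]; split; auto.
  - intros x s Hx.
    assert (E : op x s = op (op s s) (op s x)).
    { pattern x at 1; rewrite (hAR x s). apply hAG. }
    rewrite E. apply H. apply H. exact Hx.
  - intros s x Hx.
    rewrite (hAR (op s x) x). apply H. apply H. exact Hx.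
Qed.
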